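(* Let $\sigma>0$, $k>0$, $\alpha\geq 0$, $\lambda\in\mathbb{R}$, and consider the linear parabolic partial differential equation for $u=u(t,x)$, $x>0$, $$u_t=\tfrac12\sigma^2x^2u_{xx}+kx(\alpha-x)u_x+\lambda x^2u .$$ Suppose $\alpha\neq0$ or $\lambda\neq\frac{k^2}{2\sigma^2}$. Then the Lie algebra of infinitesimal (point) symmetries of this equation is spanned by the two vector fields $V_1=\partial_t$ and $V_6=u\partial_u$, together with the infinite-dimensional subalgebra of vector fields $V_\varphi=\varphi(t,x)\partial_u$, where $\varphi(t,x)$ is an arbitrary solution of the equation.
   Context: An infinitesimal symmetry is a vector field $V=\tau(t,x,u)\partial_t+\xi(t,x,u)\partial_x+\phi(t,x,u)\partial_u$ generating a one-parameter group of transformations of $(t,x,u)$ that maps solutions of the equation to solutions; equivalently, the second prolongation of $V$ applied to $\tfrac12\sigma^2x^2u_{xx}+kx(\alpha-x)u_x+\lambda x^2u-u_t$ vanishes on solutions of the equation. *)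

(* Defs.v *)
From Stdlib Require Import Reals List.
From Coquelicot Require Import Coquelicot.
Open Scope R_scope.

(* Coordinates of the base space (t, x, u). Functions are R -> R -> R -> R,
   only their values on the domain  t : R, x > 0, u : R  matter. *)
Inductive var := VT | VX | VU.

Definition pd (i : var) (f : R -> R -> R -> R) : R -> R -> R -> R :=
  match i with
  | VT => fun t x u => Derive (fun s => f s x u) t
  | VX => fun t x u => Derive (fun s => f t s u) x
  | VU => fun t x u => Derive (fun s => f t x s) u
  end.

Definition has_pd (i : var) (f : R -> R -> R -> R) (t x u : R) : Prop :=
  match i with
  | VT => ex_derive (fun s => f s x u) t
  | VX => ex_derive (fun s => f t s u) x
  | VU => ex_derive (fun s => f t x s) u
  end.

Definition iter_pd (l : list var) (f : R -> R -> R -> R) : R -> R -> R -> R :=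
  fold_right pd f l.

Definition cont3 (f : R -> R -> R -> R) (t x u : R) : Prop :=
  forall eps : R, 0 < eps -> exists delta : R, 0 < delta /\
    forall t' x' u', Rabs (t' - t) < delta -> Rabs (x' - x) < delta ->
      Rabs (u' - u) < delta -> Rabs (f t' x' u' - f t x u) < eps.

Definition smooth (f : R -> R -> R -> R) : Prop :=
  forall (l : list var) (t x u : R), 0 < x ->
    cont3 (iter_pd l f) t x u /\
    (forall i, has_pd i (iter_pd l f) t x u).

Section Eq.
Variables (sigma k alpha lambda : R).

Definition Delta (x u ut ux uxx : R) : R :=
  / 2 * sigma ^ 2 * x ^ 2 * uxx + k * x * (alpha - x) * ux
  + lambda * x ^ 2 * u - ut.

(* Second prolongation of V = tau d_t + xi d_x + phi d_u applied to Delta,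
   at the jet point (t,x,u,u_t,u_x,u_xx,u_xt,u_tt).  The prolongation
   coefficients phi^t, phi^x, phi^xx are the standard ones
   (Olver, Applications of Lie Groups to Differential Equations, (2.39)-(2.41)),
   i.e. D_J(phi - xi u_x - tau u_t) + xi u_{J,x} + tau u_{J,t}, expanded. *)
Definition prol_Delta (tau xi phi : R -> R -> R -> R)
    (t x u ut ux uxx uxt utt : R) : R :=
  let d1 i f := pd i f t x u in
  let d2 i j f := pd i (pd j f) t x u in
  let phit :=
    d1 VT phi - d1 VT xi * ux + (d1 VU phi - d1 VT tau) * ut
    - d1 VU xi * ux * ut - d1 VU tau * ut ^ 2 in
  let phix :=
    d1 VX phi + (d1 VU phi - d1 VX xi) * ux - d1 VX tau * ut
    - d1 VU xi * ux ^ 2 - d1 VU tau * ux * ut in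
  let phixx :=
    d2 VX VX phi + (2 * d2 VX VU phi - d2 VX VX xi) * ux - d2 VX VX tau * ut
    + (d2 VU VU phi - 2 * d2 VX VU xi) * ux ^ 2 - 2 * d2 VX VU tau * ux * ut
    - d2 VU VU xi * ux ^ 3 - d2 VU VU tau * ux ^ 2 * ut
    + (d1 VU phi - 2 * d1 VX xi) * uxx - 2 * d1 VX tau * uxt
    - 3 * d1 VU xi * ux * uxx - d1 VU tau * ut * uxx
    - 2 * d1 VU tau * ux * uxt in
  (* pr V (Delta) = tau Delta_t + xi Delta_x + phi Delta_u
                   + phi^t Delta_{u_t} + phi^x Delta_{u_x} + phi^xx Delta_{u_xx} *)
  tau t x u * 0
  + xi t x u * (sigma ^ 2 * x * uxx + k * (alpha - 2 * x) * ux
                + 2 * lambda * x * u)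
  + phi t x u * (lambda * x ^ 2)
  + phit * (-1)
  + phix * (k * x * (alpha - x))
  + phixx * (/ 2 * sigma ^ 2 * x ^ 2).

Definition is_symmetry (tau xi phi : R -> R -> R -> R) : Prop :=
  forall t x u ut ux uxx uxt utt, 0 < x ->
    Delta x u ut ux uxx = 0 ->
    prol_Delta tau xi phi t x u ut ux uxx uxt utt = 0.

Definition is_solution (psi : R -> R -> R) : Prop :=
  forall t x, 0 < x ->
    Derive (fun s => psi s x) t =
      / 2 * sigma ^ 2 * x ^ 2 * Derive (fun y => Derive (fun s => psi t s) y) x
      + k * x * (alpha - x) * Derive (fun s => psi t s) x
      + lambda * x ^ 2 * psi t x.
End Eq.

(* Main.v *)
Require Import Defs.
From Stdlib Require Import Reals Lra.
From Coquelicot Require Import Coquelicot.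
Open Scope R_scope.

Lemma loc_pos (x : R) : 0 < x -> locally x (fun s => 0 < s).
Proof.
  intros Hx. exists (mkposreal x Hx). intros y Hy.
  unfold ball in Hy; simpl in Hy; unfold AbsRing_ball, abs, minus, plus, opp in Hy; simpl in Hy.
  apply Rabs_lt_between in Hy. lra.
Qed.

Lemma pd_ext (f g : R -> R -> R -> R) :
  (forall t x u, 0 < x -> f t x u = g t x u) ->
  forall j t x u, 0 < x -> pd j f t x u = pd j g t x u.
Proof.
  intros H j t x u Hx. destruct j; simpl.
  - apply Derive_ext. intros s. apply H. exact Hx.
  - apply Derive_ext_loc. generalize (loc_pos x Hx). apply filter_imp.
    intros s Hs. apply H. exact Hs.
  - apply Derive_ext. intros s. apply H. exact Hx.
Qed.

Lemma pd_zero (f : R -> R -> R -> R) :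
  (forall t x u, 0 < x -> f t x u = 0) ->
  forall j t x u, 0 < x -> pd j f t x u = 0.
Proof.
  intros H j t x u Hx.
  rewrite (pd_ext f (fun _ _ _ => 0) H j t x u Hx). destruct j; simpl; apply Derive_const.
Qed.



Lemma loc_pos_dup (x : R) : 0 < x -> locally x (fun s => 0 < s).
Proof.
  intros Hx. exists (mkposreal x Hx). intros y Hy.
  unfold ball in Hy; simpl in Hy; unfold AbsRing_ball, abs, minus, plus, opp in Hy; simpl in Hy.
  apply Rabs_lt_between in Hy. lra.
Qed.

Lemma Derive_loc0 (f : R -> R) (x : R) :
  locally x (fun s => f s = 0) -> Derive f x = 0.
Proof.
  intros H. rewrite (Derive_ext_loc f (fun _ => 0)). apply Derive_const.
  exact H.
Qed.

Lemma Derive_plus_const (f : R -> R) (c x : R) :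
  Derive (fun s => c + f s) x = Derive f x.
Proof.
  unfold Derive. f_equal. apply Lim_ext. intros h. f_equal. ring.
Qed.


Lemma const_between (f : R -> R) (a b : R) :
  (forall x, Rmin a b <= x <= Rmax a b -> is_derive f x 0) -> f b = f a.
Proof.
  intros H.
  destruct (MVT_gen f a b (fun _ => 0)) as [c [_ Hc]].
  - intros x Hx. apply H. lra.
  - intros x Hx. apply continuity_pt_filterlim. apply (ex_derive_continuous f).
    eexists. apply H. exact Hx.
  - lra.
Qed.

Lemma const_pos (f : R -> R) :
  (forall x, 0 < x -> is_derive f x 0) -> forall x, 0 < x -> f x = f 1.
Proof.
  intros H x Hx. apply const_between. intros y Hy. apply H.
  unfold Rmin, Rmax in Hy. destruct (Rle_dec 1 x); lra.
Qed.

Lemma const_all (f : R -> R) :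
  (forall x, is_derive f x 0) -> forall x, f x = f 0.
Proof.
  intros H x. apply const_between. intros y Hy. apply H.
Qed.



Definition GG (c0 c1 c2 c3 c4 c5 c6 y : R) : R :=
  c0 + c1 * y + c2 * y ^ 2 + exp y * (c3 + c4 * y) + exp (2 * y) * (c5 + c6 * y).

Lemma GG_step c0 c1 c2 c3 c4 c5 c6 :
  (forall y, GG c0 c1 c2 c3 c4 c5 c6 y = 0) ->
  (forall y, GG c1 (2 * c2) 0 (c3 + c4) c4 (2 * c5 + c6) (2 * c6) y = 0).
Proof.
  intros H y.
  assert (Hd : is_derive (GG c0 c1 c2 c3 c4 c5 c6) y
                 (GG c1 (2 * c2) 0 (c3 + c4) c4 (2 * c5 + c6) (2 * c6) y)).
  { unfold GG. auto_derive; auto. ring. }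
  apply is_derive_unique in Hd. rewrite <- Hd.
  rewrite (Derive_ext _ (fun _ => 0)). apply Derive_const. exact H.
Qed.

Lemma lin_indep c0 c1 c2 c3 c4 c5 c6 :
  (forall x, 0 < x -> c0 + c1 * ln x + c2 * ln x ^ 2 + c3 * x + c4 * (x * ln x)
     + c5 * x ^ 2 + c6 * (x ^ 2 * ln x) = 0) ->
  c3 = 0 /\ c4 = 0 /\ c5 = 0 /\ c6 = 0.
Proof.
  intros H.
  assert (H0 : forall y, GG c0 c1 c2 c3 c4 c5 c6 y = 0).
  { intros y. unfold GG. rewrite <- (H (exp y) (exp_pos y)).
    rewrite ln_exp. replace (2 * y) with (y + y) by ring. rewrite exp_plus. ring. }
  pose proof (GG_step _ _ _ _ _ _ _ H0) as H1.
  pose proof (GG_step _ _ _ _ _ _ _ H1) as H2.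
  pose proof (GG_step _ _ _ _ _ _ _ H2) as H3.
  pose proof (GG_step _ _ _ _ _ _ _ H3) as H4.
  pose proof (GG_step _ _ _ _ _ _ _ H4) as H5.
  pose proof (GG_step _ _ _ _ _ _ _ H5) as H6.
  specialize (H3 0). specialize (H4 0). specialize (H5 0). specialize (H6 0).
  unfold GG in *. rewrite Rmult_0_r, exp_0 in *. lra.
Qed.

Section Fwd.
Variables sigma k alpha lambda : R.
Hypothesis Hs : 0 < sigma.
Hypothesis Hk : 0 < k.
Variables tau xi phi : R -> R -> R -> R.
Hypothesis Sm_tau : smooth tau.
Hypothesis Sm_xi : smooth xi.
Hypothesis Sm_phi : smooth phi.
Hypothesis Hsym : is_symmetry sigma k alpha lambda tau xi phi.

Let P t x u ut ux uxx uxt := prol_Delta sigma k alpha lambda tau xi phi t x u ut ux uxx uxt 0.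

Lemma P_uxt t x u ut ux uxx :
  P t x u ut ux uxx 1 - P t x u ut ux uxx 0 =
  / 2 * sigma ^ 2 * x ^ 2 * (-2 * pd VX tau t x u - 2 * pd VU tau t x u * ux).
Proof. unfold P, prol_Delta. cbv zeta. ring. Qed.

Lemma A1 t x u : 0 < x -> pd VX tau t x u = 0 /\ pd VU tau t x u = 0.
Proof.
  intros Hx.
  assert (Ha : / 2 * sigma ^ 2 * x ^ 2 <> 0).
  { apply Rgt_not_eq. apply Rmult_lt_0_compat. apply Rmult_lt_0_compat. lra.
    apply pow_lt; lra. apply pow_lt; lra. }
  assert (E0 : forall ux uxt, P t x u (k * x * (alpha - x) * ux + lambda * x ^ 2 * u) ux 0 uxt = 0).
  { intros ux uxt. unfold P. apply Hsym. exact Hx. unfold Defs.Delta. ring. }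
  pose proof (P_uxt t x u (k * x * (alpha - x) * 0 + lambda * x ^ 2 * u) 0 0) as D0.
  pose proof (P_uxt t x u (k * x * (alpha - x) * 1 + lambda * x ^ 2 * u) 1 0) as D1.
  rewrite !E0 in D0, D1.
  assert (X0 : pd VX tau t x u = 0).
  { apply (Rmult_eq_reg_l (/ 2 * sigma ^ 2 * x ^ 2)); [|exact Ha]. lra. }
  split. exact X0.
  apply (Rmult_eq_reg_l (/ 2 * sigma ^ 2 * x ^ 2)); [|exact Ha]. rewrite X0 in D1. lra.
Qed.

Lemma A1g j t x u : 0 < x -> pd j (pd VX tau) t x u = 0 /\ pd j (pd VU tau) t x u = 0.
Proof.
  intros Hx. split; apply pd_zero; auto; intros; apply A1; auto.
Qed.

Let a x := / 2 * sigma ^ 2 * x ^ 2.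
Let U x u ux uxx := / 2 * sigma ^ 2 * x ^ 2 * uxx + k * x * (alpha - x) * ux + lambda * x ^ 2 * u.
Let Q t x u ux uxx := P t x u (U x u ux uxx) ux uxx 0.

Lemma Q0 t x u ux uxx : 0 < x -> Q t x u ux uxx = 0.
Proof. intros Hx. unfold Q, P. apply Hsym. exact Hx. unfold U, Defs.Delta. ring. Qed.

Lemma Ha x : 0 < x -> / 2 * sigma ^ 2 * x ^ 2 <> 0.
Proof.
  intros Hx. apply Rgt_not_eq. apply Rmult_lt_0_compat. apply Rmult_lt_0_compat. lra.
    apply pow_lt; lra. apply pow_lt; lra.
Qed.

Lemma A2 t x u : 0 < x -> pd VU xi t x u = 0.
Proof.
  intros Hx.
  assert (D : Q t x u 1 1 - Q t x u 1 0 - Q t x u 0 1 + Q t x u 0 0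
              = -2 * (/ 2 * sigma ^ 2 * x ^ 2) * pd VU xi t x u).
  { destruct (A1 t x u Hx) as [T1 T2].
    destruct (A1g VX t x u Hx) as [T3 T4]. destruct (A1g VU t x u Hx) as [T5 T6].
    unfold Q, P, U, prol_Delta. cbv zeta. rewrite T1, T2, T3, T4, T6. ring. }
  rewrite !Q0 in D by exact Hx.
  apply (Rmult_eq_reg_l (-2 * (/ 2 * sigma ^ 2 * x ^ 2))).
  lra. generalize (Ha x Hx). intros; lra.
Qed.

Lemma A2g j t x u : 0 < x -> pd j (pd VU xi) t x u = 0.
Proof. intros Hx. apply pd_zero; auto; intros; apply A2; auto. Qed.

Lemma A3 t x u : 0 < x ->
  pd VU (pd VU phi) t x u = 0 /\
  sigma ^ 2 * x * xi t x u + / 2 * sigma ^ 2 * x ^ 2 * pd VT tau t x u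
    - 2 * (/ 2 * sigma ^ 2 * x ^ 2) * pd VX xi t x u = 0 /\
  xi t x u * (k * (alpha - 2 * x)) + pd VT xi t x u
    + k * x * (alpha - x) * pd VT tau t x u - k * x * (alpha - x) * pd VX xi t x u
    + / 2 * sigma ^ 2 * x ^ 2 * (2 * pd VX (pd VU phi) t x u - pd VX (pd VX xi) t x u) = 0 /\
  xi t x u * (2 * lambda * x * u) + phi t x u * (lambda * x ^ 2) - pd VT phi t x u
    - (pd VU phi t x u - pd VT tau t x u) * (lambda * x ^ 2 * u)
    + k * x * (alpha - x) * pd VX phi t x u
    + / 2 * sigma ^ 2 * x ^ 2 * pd VX (pd VX phi) t x u = 0.
Proof.
  intros Hx.
  destruct (A1 t x u Hx) as [T1 T2].
  destruct (A1g VX t x u Hx) as [T3 T4]. destruct (A1g VU t x u Hx) as [T5 T6].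
  pose proof (A2 t x u Hx) as X1. pose proof (A2g VX t x u Hx) as X2.
  pose proof (A2g VU t x u Hx) as X3.
  assert (Hq : forall ux uxx, Q t x u ux uxx =
     (xi t x u * (2 * lambda * x * u) + phi t x u * (lambda * x ^ 2) - pd VT phi t x u
    - (pd VU phi t x u - pd VT tau t x u) * (lambda * x ^ 2 * u)
    + k * x * (alpha - x) * pd VX phi t x u
    + / 2 * sigma ^ 2 * x ^ 2 * pd VX (pd VX phi) t x u)
    + ux * (xi t x u * (k * (alpha - 2 * x)) + pd VT xi t x u
    + k * x * (alpha - x) * pd VT tau t x u - k * x * (alpha - x) * pd VX xi t x u
    + / 2 * sigma ^ 2 * x ^ 2 * (2 * pd VX (pd VU phi) t x u - pd VX (pd VX xi) t x u))
    + uxx * (sigma ^ 2 * x * xi t x u + / 2 * sigma ^ 2 * x ^ 2 * pd VT tau t x u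
    - 2 * (/ 2 * sigma ^ 2 * x ^ 2) * pd VX xi t x u)
    + ux ^ 2 * (/ 2 * sigma ^ 2 * x ^ 2 * pd VU (pd VU phi) t x u)).
  { intros ux uxx. unfold Q, P, U, prol_Delta. cbv zeta.
    rewrite T1, T2, T3, T4, T6, X1, X2, X3. ring. }
  pose proof (Q0 t x u 0 0 Hx) as Q00. pose proof (Q0 t x u 1 0 Hx) as Q10.
  pose proof (Q0 t x u (-1) 0 Hx) as Qm0. pose proof (Q0 t x u 0 1 Hx) as Q01.
  rewrite Hq in Q00, Q10, Qm0, Q01.
  split; [|split; [|split]].
  - apply (Rmult_eq_reg_l (/ 2 * sigma ^ 2 * x ^ 2)); [|apply Ha; auto]. lra.
  - lra.
  - lra.
  - lra.
Qed.

Lemma dT (f : R -> R -> R -> R) l t x u : smooth f -> 0 < x ->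
  is_derive (fun s => iter_pd l f s x u) t (pd VT (iter_pd l f) t x u).
Proof. intros H Hx. apply Derive_correct. exact (proj2 (H l t x u Hx) VT). Qed.
Lemma dX (f : R -> R -> R -> R) l t x u : smooth f -> 0 < x ->
  is_derive (fun s => iter_pd l f t s u) x (pd VX (iter_pd l f) t x u).
Proof. intros H Hx. apply Derive_correct. exact (proj2 (H l t x u Hx) VX). Qed.
Lemma dU (f : R -> R -> R -> R) l t x u : smooth f -> 0 < x ->
  is_derive (fun s => iter_pd l f t x s) u (pd VU (iter_pd l f) t x u).
Proof. intros H Hx. apply Derive_correct. exact (proj2 (H l t x u Hx) VU). Qed.

Definition T t := tau t 1 0.
Definition T1 t := pd VT tau t 1 0.
Definition T2 t := Derive T1 t.
Definition B t := xi t 1 0.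
Definition B1 t := Derive B t.

Lemma B_tau t x u : 0 < x -> tau t x u = T t.
Proof.
  intros Hx. unfold T.
  rewrite (const_pos (fun s => tau t s u)) by (try exact Hx; intros s Hs';
    rewrite <- (proj1 (A1 t s u Hs')); exact (dX tau nil t s u Sm_tau Hs')).
  rewrite (const_all (fun s => tau t 1 s)). reflexivity.
  intros s. rewrite <- (proj2 (A1 t 1 s Rlt_0_1)). exact (dU tau nil t 1 s Sm_tau Rlt_0_1).
Qed.

Lemma B_taut t x u : 0 < x -> pd VT tau t x u = T1 t.
Proof.
  intros Hx. rewrite (pd_ext tau (fun t x u => T t) (fun t x u H => B_tau t x u H) VT t x u Hx).
  unfold T1. rewrite (pd_ext tau (fun t x u => T t) (fun t x u H => B_tau t x u H) VT t 1 0 Rlt_0_1).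
  reflexivity.
Qed.

Lemma C_xi0 t x u : 0 < x -> xi t x u = xi t x 0.
Proof.
  intros Hx. apply (const_all (fun s => xi t x s)).
  intros s. rewrite <- (A2 t x s Hx). exact (dU xi nil t x s Sm_xi Hx).
Qed.

Lemma C_xi t x u : 0 < x -> xi t x u = x * (T1 t / 2 * ln x + B t).
Proof.
  intros Hx. rewrite (C_xi0 t x u Hx).
  assert (H : forall s, 0 < s -> is_derive (fun s => xi t s 0 / s - T1 t / 2 * ln s) s 0).
  { intros s Hs0.
    destruct (A3 t s 0 Hs0) as [_ [E1 _]]. rewrite (B_taut t s 0 Hs0) in E1.
    pose proof (dX xi nil t s 0 Sm_xi Hs0) as D. simpl in D.
    evar (l : R).
    assert (D2 : is_derive (fun s => xi t s 0 / s - T1 t / 2 * ln s) s l).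
    { apply (is_derive_minus (fun s => xi t s 0 / s) (fun s => T1 t / 2 * ln s)).
      apply (is_derive_mult (fun s => xi t s 0) (fun s => / s)). exact D.
      auto_derive. lra. reflexivity. intros; apply Rmult_comm.
      auto_derive. lra. reflexivity. }
    enough (Hl : @eq R l 0) by (rewrite Hl in D2; exact D2).
    unfold l. unfold minus, plus, opp, mult; simpl.
    assert (sigma ^ 2 * s * s * s > 0).
    { apply Rmult_lt_0_compat. apply Rmult_lt_0_compat. apply Rmult_lt_0_compat. apply pow_lt; lra. lra. lra. lra. }
    apply (Rmult_eq_reg_l (- (sigma ^ 2 * s * s * s))); [|lra].
    change (pd VX xi t s 0) with (Derive (fun s0 => xi t s0 0) s) in E1. rewrite Rmult_0_r. etransitivity; [|exact E1]. field. lra. }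
  pose proof (const_pos _ H x Hx) as C. simpl in C. rewrite ln_1 in C.
  unfold B. assert (C' : xi t x 0 / x = T1 t / 2 * ln x + xi t 1 0 / 1) by lra.
  replace (xi t x 0) with (x * (xi t x 0 / x)) by (field; lra). rewrite C'. field.
Qed.


Lemma exT1 t : ex_derive T1 t.
Proof. eexists. exact (dT tau (VT :: nil) t 1 0 Sm_tau Rlt_0_1). Qed.
Lemma exT2 t : ex_derive T2 t.
Proof. eexists. exact (dT tau (VT :: VT :: nil) t 1 0 Sm_tau Rlt_0_1). Qed.
Lemma exB t : ex_derive B t.
Proof. eexists. exact (dT xi nil t 1 0 Sm_xi Rlt_0_1). Qed.
Lemma exB1 t : ex_derive B1 t.
Proof. eexists. exact (dT xi (VT :: nil) t 1 0 Sm_xi Rlt_0_1). Qed.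

Lemma C_xit t x u : 0 < x -> pd VT xi t x u = x * (T2 t / 2 * ln x + B1 t).
Proof.
  intros Hx. rewrite (pd_ext xi _ C_xi VT t x u Hx).
  cbv beta iota delta [pd].
  apply is_derive_unique.
  evar (l : R).
  assert (D : is_derive (fun s => x * (T1 s / 2 * ln x + B s)) t l).
  { unfold l. auto_derive. split. apply exT1. split. apply exB. auto. reflexivity. }
  enough (Hl : @eq R l (x * (T2 t / 2 * ln x + B1 t))) by (rewrite Hl in D; exact D).
  unfold l, T2, B1. change (fun x0 : R => T1 x0) with T1. change (fun x0 : R => B x0) with B. field.
Qed.

Lemma C_xix t x u : 0 < x -> pd VX xi t x u = T1 t / 2 * ln x + B t + T1 t / 2.
Proof.
  intros Hx. rewrite (pd_ext xi _ C_xi VX t x u Hx).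
  cbv beta iota delta [pd].
  apply is_derive_unique.
  evar (l : R).
  assert (D : is_derive (fun s => s * (T1 t / 2 * ln s + B t)) x l).
  { unfold l. auto_derive. lra. reflexivity. }
  enough (Hl : @eq R l (T1 t / 2 * ln x + B t + T1 t / 2)) by (rewrite Hl in D; exact D).
  unfold l. field. lra.
Qed.

Lemma C_xixx t x u : 0 < x -> pd VX (pd VX xi) t x u = T1 t / (2 * x).
Proof.
  intros Hx. rewrite (pd_ext (pd VX xi) _ C_xix VX t x u Hx).
  cbv beta iota delta [pd].
  apply is_derive_unique.
  evar (l : R).
  assert (D : is_derive (fun s => T1 t / 2 * ln s + B t + T1 t / 2) x l).
  { unfold l. auto_derive. lra. reflexivity. }
  enough (Hl : @eq R l (T1 t / (2 * x))) by (rewrite Hl in D; exact D).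
  unfold l. field. lra.
Qed.

Definition F t x := pd VU phi t x 0.
Definition Fx t x := pd VX (pd VU phi) t x 0.

Lemma E_phiu t x u : 0 < x -> pd VU phi t x u = F t x.
Proof.
  intros Hx. unfold F. apply (const_all (fun s => pd VU phi t x s)).
  intros s. rewrite <- (proj1 (A3 t x s Hx)). exact (dU phi (VU :: nil) t x s Sm_phi Hx).
Qed.

Lemma E_phi t x u : 0 < x -> phi t x u = F t x * u + phi t x 0.
Proof.
  intros Hx.
  assert (H : forall s, is_derive (fun s => phi t x s - F t x * s) s 0).
  { intros s. evar (l : R).
    assert (D : is_derive (fun s => phi t x s - F t x * s) s l).
    { apply (is_derive_minus (fun s => phi t x s) (fun s => F t x * s)).
      exact (dU phi nil t x s Sm_phi Hx). apply is_derive_scal. apply is_derive_id. }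
    enough (Hl : @eq R l 0) by (rewrite Hl in D; exact D).
    unfold l. unfold minus, plus, opp, scal, one; simpl. unfold mult; simpl.
    change (Derive (fun s0 : R => phi t x s0) s) with (pd VU phi t x s). rewrite (E_phiu t x s Hx). ring. }
  pose proof (const_all _ H u) as C. simpl in C. lra.
Qed.

Lemma E_phixu t x u : 0 < x -> pd VX (pd VU phi) t x u = Fx t x.
Proof.
  intros Hx. unfold Fx.
  rewrite (pd_ext (pd VU phi) _ (fun t x u H => E_phiu t x u H) VX t x u Hx).
  rewrite (pd_ext (pd VU phi) _ (fun t x u H => E_phiu t x u H) VX t x 0 Hx).
  reflexivity.
Qed.

Definition Pc t := (- B1 t - k * alpha * T1 t / 2 + sigma ^ 2 * T1 t / 4) / sigma ^ 2.
Definition Qc t := - T2 t / (2 * sigma ^ 2).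
Definition Rc t := (k * B t + k * T1 t / 2) / sigma ^ 2.
Definition Sc t := k * T1 t / (2 * sigma ^ 2).
Definition Fxe t x := (Pc t + Qc t * ln x) / x + Rc t + Sc t * ln x.

Lemma E_Fx t x : 0 < x -> Fx t x = Fxe t x.
Proof.
  intros Hx.
  destruct (A3 t x 0 Hx) as [_ [_ [E2 _]]].
  rewrite (C_xi t x 0 Hx), (C_xit t x 0 Hx), (B_taut t x 0 Hx), (C_xix t x 0 Hx),
    (C_xixx t x 0 Hx), (E_phixu t x 0 Hx) in E2.
  apply (Rmult_eq_reg_l (sigma ^ 2 * x ^ 2)).
  2:{ apply Rgt_not_eq. apply Rmult_lt_0_compat; apply pow_lt; lra. }
  apply Rminus_diag_uniq. etransitivity; [|exact E2].
  unfold Fxe, Pc, Qc, Rc, Sc. field. lra.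
Qed.


Definition Fint t x := Pc t * ln x + Qc t * (ln x ^ 2 / 2) + Rc t * x + Sc t * (x * ln x - x).
Definition Ec t := F t 1 - Rc t + Sc t.

Lemma E_F t x : 0 < x -> F t x = Fint t x + Ec t.
Proof.
  intros Hx.
  assert (H : forall s, 0 < s -> is_derive (fun s => F t s - Fint t s) s 0).
  { intros s Hs0. evar (l : R).
    assert (D : is_derive (fun s => F t s - Fint t s) s l).
    { apply (is_derive_minus (fun s => F t s) (fun s => Fint t s)).
      exact (dX phi (VU :: nil) t s 0 Sm_phi Hs0).
      unfold Fint. auto_derive. lra. reflexivity. }
    enough (Hl : @eq R l 0) by (rewrite Hl in D; exact D).
    unfold l. unfold minus, plus, opp; simpl.
    change (Derive (fun s0 : R => Derive (fun s1 : R => phi t s0 s1) 0) s) with (Fx t s).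
    rewrite (E_Fx t s Hs0). unfold Fxe. field. lra. }
  pose proof (const_pos _ H x Hx) as C. simpl in C.
  unfold Ec. unfold Fint in C |- *. rewrite ln_1 in C. lra.
Qed.

Definition Ft t x := Derive (fun s => F s x) t.
Definition Fxx t x := Derive (fun s => Fx t s) x.

Lemma lin2 (p e : R -> R) t c :
  ex_derive p t -> ex_derive e t ->
  Derive (fun z => p z * c + e z) t = Derive p t * c + Derive e t.
Proof.
  intros Hp He. apply is_derive_unique. auto_derive.
  repeat split; auto. change (fun x : R => p x) with p. change (fun x : R => e x) with e. ring.
Qed.

Lemma G_phit t x u : 0 < x -> pd VT phi t x u = Ft t x * u + pd VT phi t x 0.
Proof.
  intros Hx. rewrite (pd_ext phi _ E_phi VT t x u Hx).
  cbv beta iota delta [pd]. apply lin2.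
  eexists. exact (dT phi (VU :: nil) t x 0 Sm_phi Hx).
  eexists. exact (dT phi nil t x 0 Sm_phi Hx).
Qed.

Lemma G_phix t x u : 0 < x -> pd VX phi t x u = Fx t x * u + pd VX phi t x 0.
Proof.
  intros Hx. rewrite (pd_ext phi _ E_phi VX t x u Hx).
  cbv beta iota delta [pd]. apply lin2.
  eexists. exact (dX phi (VU :: nil) t x 0 Sm_phi Hx).
  eexists. exact (dX phi nil t x 0 Sm_phi Hx).
Qed.

Lemma G_phixx t x u : 0 < x ->
  pd VX (pd VX phi) t x u = Fxx t x * u + pd VX (pd VX phi) t x 0.
Proof.
  intros Hx. rewrite (pd_ext (pd VX phi) _ G_phix VX t x u Hx).
  cbv beta iota delta [pd]. apply lin2.
  eexists. exact (dX phi (VX :: VU :: nil) t x 0 Sm_phi Hx).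
  eexists. exact (dX phi (VX :: nil) t x 0 Sm_phi Hx).
Qed.

Lemma E3u t x : 0 < x ->
  Ft t x = 2 * lambda * x * xi t x 0 + T1 t * lambda * x ^ 2
    + k * x * (alpha - x) * Fx t x + / 2 * sigma ^ 2 * x ^ 2 * Fxx t x.
Proof.
  intros Hx.
  destruct (A3 t x 1 Hx) as [_ [_ [_ E31]]].
  destruct (A3 t x 0 Hx) as [_ [_ [_ E30]]].
  rewrite (G_phit t x 1 Hx), (G_phix t x 1 Hx), (G_phixx t x 1 Hx), (E_phiu t x 1 Hx),
    (E_phi t x 1 Hx), (B_taut t x 1 Hx), (C_xi0 t x 1 Hx) in E31.
  rewrite (B_taut t x 0 Hx) in E30.
  change (pd VU phi t x 0) with (F t x) in E30.
  lra.
Qed.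

Lemma E_Fxx t x : 0 < x -> Fxx t x = (Qc t - Pc t - Qc t * ln x) / x ^ 2 + Sc t / x.
Proof.
  intros Hx. unfold Fxx.
  rewrite (Derive_ext_loc _ (Fxe t)).
  2:{ generalize (loc_pos x Hx). apply filter_imp. intros s Hs0. apply E_Fx. exact Hs0. }
  apply is_derive_unique. evar (l : R).
  assert (D : is_derive (Fxe t) x l).
  { unfold Fxe, l. auto_derive. lra. reflexivity. }
  enough (Hl : @eq R l ((Qc t - Pc t - Qc t * ln x) / x ^ 2 + Sc t / x)) by (rewrite Hl in D; exact D).
  unfold l. field. lra.
Qed.

Lemma lin5 (p q r s e : R -> R) t c1 c2 c3 c4 :
  ex_derive p t -> ex_derive q t -> ex_derive r t -> ex_derive s t -> ex_derive e t ->
  Derive (fun z => p z * c1 + q z * c2 + r z * c3 + s z * c4 + e z) t =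
  Derive p t * c1 + Derive q t * c2 + Derive r t * c3 + Derive s t * c4 + Derive e t.
Proof.
  intros Hp Hq Hr Hs0 He. apply is_derive_unique. auto_derive.
  repeat split; auto. change (fun x : R => p x) with p. change (fun x : R => q x) with q. change (fun x : R => r x) with r. change (fun x : R => s x) with s. change (fun x : R => e x) with e. ring.
Qed.

Lemma exPc t : ex_derive Pc t.
Proof. unfold Pc. auto_derive. repeat split; auto using exB1, exT1. Qed.
Lemma exQc t : ex_derive Qc t.
Proof. unfold Qc. auto_derive. repeat split; auto using exT2. Qed.
Lemma exRc t : ex_derive Rc t.
Proof. unfold Rc. auto_derive. repeat split; auto using exB, exT1. Qed.
Lemma exSc t : ex_derive Sc t.
Proof. unfold Sc. auto_derive. repeat split; auto using exT1. Qed.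
Lemma exEc t : ex_derive Ec t.
Proof.
  unfold Ec. apply (ex_derive_plus (fun s => F s 1 - Rc s) Sc).
  apply (ex_derive_minus (fun s => F s 1) Rc).
  eexists. exact (dT phi (VU :: nil) t 1 0 Sm_phi Rlt_0_1).
  apply exRc. apply exSc.
Qed.

Lemma dRc t : Derive Rc t = (k * B1 t + k * T2 t / 2) / sigma ^ 2.
Proof.
  apply is_derive_unique. unfold Rc. auto_derive. repeat split; auto using exB, exT1.
  unfold B1, T2. change (fun x : R => B x) with B. change (fun x : R => T1 x) with T1.
  field. lra.
Qed.
Lemma dSc t : Derive Sc t = k * T2 t / (2 * sigma ^ 2).
Proof.
  apply is_derive_unique. unfold Sc. auto_derive. repeat split; auto using exT1.
  unfold T2. change (fun x : R => T1 x) with T1.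
  field. lra.
Qed.

Lemma E_Ft t x : 0 < x -> Ft t x =
  Derive Pc t * ln x + Derive Qc t * (ln x ^ 2 / 2) + Derive Rc t * x
  + Derive Sc t * (x * ln x - x) + Derive Ec t.
Proof.
  intros Hx. unfold Ft.
  rewrite (Derive_ext _ (fun z => Pc z * ln x + Qc z * (ln x ^ 2 / 2) + Rc z * x
                                + Sc z * (x * ln x - x) + Ec z)).
  2:{ intros z. rewrite (E_F z x Hx). reflexivity. }
  apply lin5; auto using exPc, exQc, exRc, exSc, exEc.
Qed.


Lemma key t : (alpha <> 0 \/ lambda <> k ^ 2 / (2 * sigma ^ 2)) -> T1 t = 0 /\ B t = 0.
Proof.
  intros Hc.
  assert (Hid : forall x, 0 < x ->
    (k * alpha * Pc t + sigma ^ 2 * (Qc t - Pc t) / 2 - Derive Ec t)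
    + (k * alpha * Qc t - sigma ^ 2 * Qc t / 2 - Derive Pc t) * ln x
    + (- Derive Qc t / 2) * ln x ^ 2
    + (k * alpha * Rc t - k * Pc t + sigma ^ 2 * Sc t / 2 - Derive Rc t + Derive Sc t) * x
    + (k * alpha * Sc t - k * Qc t - Derive Sc t) * (x * ln x)
    + (lambda * T1 t + 2 * lambda * B t - k * Rc t) * x ^ 2
    + (lambda * T1 t - k * Sc t) * (x ^ 2 * ln x) = 0).
  { intros x Hx. pose proof (E3u t x Hx) as E.
    rewrite (E_Ft t x Hx), (E_Fxx t x Hx), (E_Fx t x Hx), (C_xi t x 0 Hx) in E.
    unfold Fxe in E.
    match type of E with ?L = ?R => transitivity (R - L) end.
    field. lra. lra. }
  destruct (lin_indep _ _ _ _ _ _ _ Hid) as [c3 [c4 [c5 c6]]].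
  rewrite dRc, dSc in c3. rewrite dSc in c4.
  assert (H4 : k ^ 2 / (2 * sigma ^ 2) * (alpha * T1 t) = 0).
  { rewrite <- c4. unfold Sc, Qc. field. lra. }
  assert (H3 : k ^ 2 / sigma ^ 2 * (alpha * (T1 t + B t)) = 0).
  { rewrite <- c3. unfold Sc, Qc, Rc, Pc. field. lra. }
  assert (H6 : (lambda - k ^ 2 / (2 * sigma ^ 2)) * T1 t = 0).
  { rewrite <- c6. unfold Sc. field. lra. }
  assert (H5 : (lambda - k ^ 2 / (2 * sigma ^ 2)) * (T1 t + 2 * B t) = 0).
  { rewrite <- c5. unfold Rc. field. lra. }
  assert (Kp : k ^ 2 / (2 * sigma ^ 2) <> 0).
  { apply Rgt_not_eq. apply Rdiv_lt_0_compat. apply pow_lt; lra.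
    apply Rmult_lt_0_compat. lra. apply pow_lt; lra. }
  assert (Kp2 : k ^ 2 / sigma ^ 2 <> 0).
  { apply Rgt_not_eq. apply Rdiv_lt_0_compat. apply pow_lt; lra. apply pow_lt; lra. }
  destruct Hc as [Ha0 | Hl0].
  - apply Rmult_integral in H4. destruct H4 as [H4|H4]. contradiction.
    apply Rmult_integral in H4. destruct H4 as [H4|H4]. contradiction.
    apply Rmult_integral in H3. destruct H3 as [H3|H3]. contradiction.
    apply Rmult_integral in H3. destruct H3 as [H3|H3]. contradiction.
    split; lra.
  - apply Rmult_integral in H6. destruct H6 as [H6|H6]. exfalso; apply Hl0; lra.
    apply Rmult_integral in H5. destruct H5 as [H5|H5]. exfalso; apply Hl0; lra.
    split; lra.
Qed.


Lemma forward : (alpha <> 0 \/ lambda <> k ^ 2 / (2 * sigma ^ 2)) ->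
  exists (c1 c6 : R) (psi : R -> R -> R),
    is_solution sigma k alpha lambda psi /\
    forall t x u, 0 < x ->
      tau t x u = c1 /\ xi t x u = 0 /\ phi t x u = c6 * u + psi t x.
Proof.
  intros Hc.
  assert (T1z : forall t, T1 t = 0) by (intros t; exact (proj1 (key t Hc))).
  assert (Bz : forall t, B t = 0) by (intros t; exact (proj2 (key t Hc))).
  assert (T2z : forall t, T2 t = 0).
  { intros t. unfold T2. rewrite (Derive_ext T1 (fun _ => 0)) by exact T1z. apply Derive_const. }
  assert (B1z : forall t, B1 t = 0).
  { intros t. unfold B1. rewrite (Derive_ext B (fun _ => 0)) by exact Bz. apply Derive_const. }
  assert (Pz : forall t, Pc t = 0) by (intros t; unfold Pc; rewrite B1z, T1z; field; lra).
  assert (Qz : forall t, Qc t = 0) by (intros t; unfold Qc; rewrite T2z; field; lra).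
  assert (Rz : forall t, Rc t = 0) by (intros t; unfold Rc; rewrite Bz, T1z; field; lra).
  assert (Sz : forall t, Sc t = 0) by (intros t; unfold Sc; rewrite T1z; field; lra).
  assert (HT : forall t, T t = T 0).
  { apply const_all. intros t. rewrite <- (T1z t). exact (dT tau nil t 1 0 Sm_tau Rlt_0_1). }
  assert (HF1 : forall t, F t 1 = F 0 1).
  { apply (const_all (fun s => F s 1)). intros t.
    assert (D := dT phi (VU :: nil) t 1 0 Sm_phi Rlt_0_1).
    change (pd VT (iter_pd (VU :: nil) phi) t 1 0) with (Ft t 1) in D.
    enough (Hl : Ft t 1 = 0) by (rewrite Hl in D; exact D).
    rewrite (E3u t 1 Rlt_0_1), (E_Fx t 1 Rlt_0_1), (E_Fxx t 1 Rlt_0_1), (C_xi t 1 0 Rlt_0_1).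
    unfold Fxe. rewrite T1z, Bz, Pz, Qz, Rz, Sz. field. }
  assert (HF : forall t x, 0 < x -> F t x = F 0 1).
  { intros t x Hx. rewrite (E_F t x Hx). unfold Fint, Ec. rewrite Pz, Qz, Rz, Sz, HF1. ring. }
  exists (T 0), (F 0 1), (fun t x => phi t x 0). split.
  - intros t x Hx.
    destruct (A3 t x 0 Hx) as [_ [_ [_ E30]]].
    change (Derive (fun s => phi s x 0) t) with (pd VT phi t x 0).
    change (Derive (fun y => Derive (fun s => phi t s 0) y) x) with (pd VX (pd VX phi) t x 0).
    change (Derive (fun s => phi t s 0) x) with (pd VX phi t x 0).
    rewrite !Rmult_0_r in E30. lra.
  - intros t x u Hx. split; [|split].
    + rewrite (B_tau t x u Hx). apply HT.
    + rewrite (C_xi t x u Hx), T1z, Bz. field.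
    + rewrite (E_phi t x u Hx), (HF t x Hx). reflexivity.
Qed.

End Fwd.

Lemma pd_const (f : R -> R -> R -> R) (c : R) :
  (forall t x u, 0 < x -> f t x u = c) ->
  forall j t x u, 0 < x -> pd j f t x u = 0.
Proof.
  intros H j t x u Hx.
  rewrite (pd_ext f (fun _ _ _ => c) H j t x u Hx). destruct j; simpl; apply Derive_const.
Qed.

Lemma backward (sigma k alpha lambda : R) (tau xi phi : R -> R -> R -> R) :
  (exists (c1 c6 : R) (psi : R -> R -> R),
     is_solution sigma k alpha lambda psi /\
     forall t x u, 0 < x ->
       tau t x u = c1 /\ xi t x u = 0 /\ phi t x u = c6 * u + psi t x) ->
  is_symmetry sigma k alpha lambda tau xi phi.
Proof.
  intros [c1 [c6 [psi [Hsol H]]]].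
  intros t x u ut ux uxx uxt utt Hx HD.
  assert (Ht : forall t x u, 0 < x -> tau t x u = c1) by (intros; apply H; auto).
  assert (Hxi : forall t x u, 0 < x -> xi t x u = 0) by (intros; apply H; auto).
  assert (Hp : forall t x u, 0 < x -> phi t x u = c6 * u + psi t x) by (intros; apply H; auto).
  assert (t1 : forall j, pd j tau t x u = 0) by (intros j; apply (pd_const _ c1 Ht); auto).
  assert (t2 : forall i j, pd i (pd j tau) t x u = 0).
  { intros i j. apply pd_zero; auto. intros; apply (pd_const _ c1 Ht); auto. }
  assert (x1 : forall j, pd j xi t x u = 0) by (intros j; apply (pd_zero _ Hxi); auto).
  assert (x2 : forall i j, pd i (pd j xi) t x u = 0).
  { intros i j. apply pd_zero; auto. intros; apply (pd_zero _ Hxi); auto. }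
  assert (pu : forall t x u, 0 < x -> pd VU phi t x u = c6).
  { intros t' x' u' Hx'. rewrite (pd_ext _ _ Hp VU t' x' u' Hx').
    cbv beta iota delta [pd]. apply is_derive_unique. auto_derive. auto. ring. }
  assert (p2 : forall i, pd i (pd VU phi) t x u = 0).
  { intros i. apply (pd_const _ c6 pu); auto. }
  assert (pt : pd VT phi t x u = Derive (fun s => psi s x) t).
  { rewrite (pd_ext _ _ Hp VT t x u Hx). cbv beta iota delta [pd].
    apply Derive_plus_const. }
  assert (px : forall t x u, 0 < x -> pd VX phi t x u = Derive (fun s => psi t s) x).
  { intros t' x' u' Hx'. rewrite (pd_ext _ _ Hp VX t' x' u' Hx'). cbv beta iota delta [pd].
    apply Derive_plus_const. }
  assert (pxx : pd VX (pd VX phi) t x u = Derive (fun y => Derive (fun s => psi t s) y) x).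
  { rewrite (pd_ext _ _ px VX t x u Hx). reflexivity. }
  pose proof (Hsol t x Hx) as S. 
  unfold prol_Delta. cbv zeta. rewrite (Hp t x u Hx).
  rewrite !t1, !t2, !x1, !x2, (pu t x u Hx), !p2, pt, (px t x u Hx), pxx.
  rewrite (Hxi t x u Hx), (Ht t x u Hx).
  unfold Defs.Delta in HD.
  set (d1 := Derive (fun s => psi s x) t) in *.
  set (d3 := Derive (fun y => Derive (fun s => psi t s) y) x) in *.
  set (d2 := Derive (fun s => psi t s) x) in *.
  match goal with |- ?L = 0 =>
    transitivity (c6 * (/ 2 * sigma ^ 2 * x ^ 2 * uxx + k * x * (alpha - x) * ux +
      lambda * x ^ 2 * u - ut) - (d1 -
      (/ 2 * sigma ^ 2 * x ^ 2 * d3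
      + k * x * (alpha - x) * d2 + lambda * x ^ 2 * psi t x))) end.
  ring. rewrite HD, S. ring.
Qed.

Theorem proposition2p2 (sigma k alpha lambda : R) :
  0 < sigma -> 0 < k -> 0 <= alpha ->
  (alpha <> 0 \/ lambda <> k ^ 2 / (2 * sigma ^ 2)) ->
  forall tau xi phi : R -> R -> R -> R,
    smooth tau -> smooth xi -> smooth phi ->
    (is_symmetry sigma k alpha lambda tau xi phi <->
     exists (c1 c6 : R) (psi : R -> R -> R),
       is_solution sigma k alpha lambda psi /\
       forall t x u, 0 < x ->
         tau t x u = c1 /\ xi t x u = 0 /\ phi t x u = c6 * u + psi t x).
Proof.
  intros Hs Hk Ha Hc tau xi phi St Sx Sp. split.
  - intros Hsym. exact (forward sigma k alpha lambda Hs Hk tau xi phi St Sx Sp Hsym Hc).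
  - apply backward.
Qed.
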